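(* For any partition $\lambda=(\lambda_1,\dots,\lambda_n)$ with at most $n$ parts and generic $a,b,q,p,t\in\mathbb{C}$, \begin{multline*} W_\lambda(q^{\lambda}t^{\delta(n)};q,p,t,a,b)=\prod_{k=1}^n\left\{\frac{(qbt^{n-k},qt^{n-k})_{\lambda_k}(at^{2n-2k})_{2\lambda_k}}{((a/b)t^{n-k},at^{n-k})_{\lambda_k}(qbt^{n+1-2k})_{2\lambda_k}}t^{(n+1-2k)\lambda_k}\right\}\\ \cdot(a/(qb))^{|\lambda|}\prod_{1\le i<j\le n}\frac{(qt^{j-i-1})_{\lambda_i-\lambda_j}(at^{2n-i-j})_{\lambda_i+\lambda_j}}{(qt^{j-i})_{\lambda_i-\lambda_j}(at^{1+2n-i-j})_{\lambda_i+\lambda_j}}. \end{multline*}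
   Context: Fix $|p|<1$; parameters generic. $E(x)=(x;p)_\infty(p/x;p)_\infty$. For integer $m\ge0$, $(a)_m=\prod_{k=0}^{m-1}E(aq^k)$, for $m<0$, $(a)_m=1/(aq^m)_{-m}$; for a partition $\lambda$ with $n$ parts $(a)_\lambda=\prod_{i=1}^n(at^{1-i})_{\lambda_i}$; several arguments denote products; integer subscripts denote the single-integer symbol. $|\lambda|=\sum_i\lambda_i$, $q^\lambda t^{\delta(n)}=(q^{\lambda_1}t^{n-1},\dots,q^{\lambda_n})$. For $n$-part partitions with $\lambda_1\ge\mu_1\ge\dots\ge\lambda_n\ge\mu_n$, $\lambda_{n+1}=\mu_{n+1}=0$, $H_{\lambda/\mu}(q,p,t,b)=\prod_{1\le i<j\le n}\Big\{\frac{(q^{\mu_i-\mu_{j-1}}t^{j-i})_{\mu_{j-1}-\lambda_j}(q^{\lambda_i+\lambda_j}t^{3-j-i}b)_{\mu_{j-1}-\lambda_j}}{(q^{\mu_i-\mu_{j-1}+1}t^{j-i-1})_{\mu_{j-1}-\lambda_j}(q^{\lambda_i+\lambda_j+1}t^{2-j-i}b)_{\mu_{j-1}-\lambda_j}}\frac{(q^{\lambda_i-\mu_{j-1}+1}t^{j-i-1})_{\mu_{j-1}-\lambda_j}}{(q^{\lambda_i-\mu_{j-1}}t^{j-i})_{\mu_{j-1}-\lambda_j}}\Big\}\prod_{1\le i<j-1\le n}\frac{(q^{\mu_i+\lambda_j+1}t^{1-j-i}b)_{\mu_{j-1}-\lambda_j}}{(q^{\mu_i+\lambda_j}t^{2-j-i}b)_{\mu_{j-1}-\lambda_j}}$;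 for $x\in\mathbb{C}$, $W_{\lambda/\mu}(x;q,p,t,a,b)=H_{\lambda/\mu}\frac{(x^{-1},ax)_\lambda(qbx/t,qb/(axt))_\mu}{(x^{-1},ax)_\mu(qbx,qb/(ax))_\lambda}\prod_{i=1}^n\frac{E(bt^{1-2i}q^{2\mu_i})}{E(bt^{1-2i})}\frac{(bt^{1-2i})_{\mu_i+\lambda_{i+1}}}{(bqt^{-2i})_{\mu_i+\lambda_{i+1}}}t^{i(\mu_i-\lambda_{i+1})}$ (zero if the interlacing fails); recursively $W_{\lambda/\mu}(y,z_1,\dots,z_\ell;q,p,t,a,b)=\sum_\nu W_{\lambda/\nu}(yt^{-\ell};q,p,t,at^{2\ell},bt^\ell)W_{\nu/\mu}(z_1,\dots,z_\ell;q,p,t,a,b)$ over $\nu$ with $\lambda_1\ge\nu_1\ge\dots\ge\lambda_n\ge\nu_n\ge0$; $W_\lambda=W_{\lambda/0}$. *)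

(* Defs.v *)
From Stdlib Require Import Reals ZArith List Bool.
From Coquelicot Require Import Coquelicot.
Import ListNotations.
Open Scope bool_scope.
Open Scope C_scope.

Fixpoint cpow (x : C) (n : nat) : C :=
  match n with O => 1 | S m => x * cpow x m end.
Definition zpow (x : C) (z : Z) : C :=
  match z with
  | Z0 => 1
  | Zpos k => cpow x (Pos.to_nat k)
  | Zneg k => / cpow x (Pos.to_nat k)
  end.

Definition prodC {A : Type} (l : list A) (f : A -> C) : C :=
  fold_right (fun i acc => f i * acc) 1 l.
Definition sumC {A : Type} (l : list A) (f : A -> C) : C :=
  fold_right (fun i acc => f i + acc) 0 l.

(* (x;p)_infinity = prod_{k>=0} (1 - x p^k), as the limit of its partial
   products (taken componentwise; the product converges for |p| < 1). *)
Definition qpoch_part (x p : C) (N : nat) : C :=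
  prodC (seq 0 N) (fun k => 1 - x * cpow p k).
Definition qpoch_inf (x p : C) : C :=
  (real (Lim_seq (fun N => Re (qpoch_part x p N))),
   real (Lim_seq (fun N => Im (qpoch_part x p N)))).

Definition theta (p x : C) : C := qpoch_inf x p * qpoch_inf (p / x) p.

Definition esf_nat (p q a : C) (m : nat) : C :=
  prodC (seq 0 m) (fun k => theta p (a * cpow q k)).
Definition esf (p q a : C) (m : Z) : C :=
  if (0 <=? m)%Z then esf_nat p q a (Z.to_nat m)
  else / esf_nat p q (a * zpow q m) (Z.to_nat (- m)).

(* partitions with n parts are lists of length n; 1-based access,
   with part l (n+1) = 0 *)
Definition part (l : list nat) (i : nat) : nat := nth (i - 1) l 0%nat.
Definition zpart (l : list nat) (i : nat) : Z := Z.of_nat (part l i).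
Definition zn (i : nat) : Z := Z.of_nat i.

Definition is_partition (l : list nat) : Prop :=
  forall i, (1 <= i < length l)%nat -> (part l (S i) <= part l i)%nat.

Definition psize (l : list nat) : nat := fold_right Nat.add 0%nat l.

Definition interlaceb (l m : list nat) : bool :=
  Nat.eqb (length m) (length l) &&
  forallb (fun i => Nat.leb (part m i) (part l i) && Nat.leb (part l (S i)) (part m i))
          (seq 1 (length l)).

Fixpoint interl (l : list nat) : list (list nat) :=
  match l with
  | [] => [[]]
  | x :: r =>
      let lo := hd 0%nat r in
      flat_map (fun v => map (cons v) (interl r)) (seq lo (S (x - lo)))
  end.

Section W.
Variables (q p t : C).

Definition mono (c : C) (i j : Z) : C := c * zpow q i * zpow t j.

Definition esf_part (c : C) (l : list nat) : C :=
  prodC (seq 1 (length l)) (fun i => esf p q (c * zpow t (1 - zn i)) (zpart l i)).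

(* (c)_lambda / (c)_mu, with common factors cancelled:
   prod_i (c t^{1-i} q^{mu_i})_{lambda_i - mu_i} *)
Definition esf_ratio (c : C) (l m : list nat) : C :=
  prodC (seq 1 (length l))
    (fun i => esf p q (c * zpow t (1 - zn i) * zpow q (zpart m i)) (zpart l i - zpart m i)).

Definition Hfac (b : C) (l m : list nat) : C :=
  let n := length l in
  let L := zpart l in let M := zpart m in
  prodC (seq 1 n) (fun i => prodC (seq (S i) (n - i)) (fun j =>
    let e := (M (j - 1)%nat - L j)%Z in
    esf p q (mono 1 (M i - M (j - 1)%nat) (zn j - zn i)) e
    * esf p q (mono b (L i + L j) (3 - zn j - zn i)) e
    / (esf p q (mono 1 (M i - M (j - 1)%nat + 1) (zn j - zn i - 1)) e
       * esf p q (mono b (L i + L j + 1) (2 - zn j - zn i)) e)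
    * esf p q (mono 1 (L i - M (j - 1)%nat + 1) (zn j - zn i - 1)) e
    / esf p q (mono 1 (L i - M (j - 1)%nat) (zn j - zn i)) e))
  * prodC (seq 1 n) (fun i => prodC (seq (S (S i)) (n - i)) (fun j =>
    let e := (M (j - 1)%nat - L j)%Z in
    esf p q (mono b (M i + L j + 1) (1 - zn j - zn i)) e
    / esf p q (mono b (M i + L j) (2 - zn j - zn i)) e)).

Definition W1 (a b x : C) (l m : list nat) : C :=
  if interlaceb l m then
    let n := length l in
    let L := zpart l in let M := zpart m in
    Hfac b l m
    * esf_ratio (/ x) l m * esf_ratio (a * x) l m
    * esf_part (q * b * x / t) m * esf_part (q * b / (a * x * t)) m
    / (esf_part (q * b * x) l * esf_part (q * b / (a * x)) l)
    * prodC (seq 1 n) (fun i =>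
        theta p (mono b (2 * M i) (1 - 2 * zn i)) / theta p (mono b 0 (1 - 2 * zn i))
        * esf p q (mono b 0 (1 - 2 * zn i)) (M i + L (S i))
        / esf p q (mono b 1 (- 2 * zn i)) (M i + L (S i))
        * zpow t (zn i * (M i - L (S i))))
  else 0.

(* multivariable W_{lambda/mu}(x_1,...,x_k; q,p,t,a,b), by the branching rule *)
Fixpoint Wskew (xs : list C) (a b : C) (l m : list nat) : C :=
  match xs with
  | [] => if list_eq_dec Nat.eq_dec l m then 1 else 0
  | y :: zs =>
      let k := zn (length zs) in
      sumC (interl l) (fun nu =>
        W1 (a * zpow t (2 * k)) (b * zpow t k) (y * zpow t (- k)) l nu
        * Wskew zs a b nu m)
  end.

Definition W (xs : list C) (a b : C) (l : list nat) : C :=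
  Wskew xs a b l (repeat 0%nat (length l)).

End W.

Definition generic (p q t a b : C) : Prop :=
  Cmod p < 1 /\ q <> 0 /\ t <> 0 /\ a <> 0 /\ b <> 0 /\
  forall i j k l : Z, (i, j, k, l) <> (0%Z, 0%Z, 0%Z, 0%Z) ->
    theta p (zpow q i * zpow t j * zpow a k * zpow b l) <> 0.

Definition spec_point (q t : C) (l : list nat) : list C :=
  map (fun i => zpow q (zpart l i) * zpow t (zn (length l) - zn i)) (seq 1 (length l)).

(* Main.v *)
Require Import Defs.
From Stdlib Require Import Reals ZArith List Lia Lra Bool Classical.
From Coquelicot Require Import Coquelicot.
Import ListNotations.
Open Scope C_scope.

Lemma Cinv0 : / (0:C) = 0.
Proof.
  unfold Cinv; simpl. apply injective_projections; simpl; unfold Rdiv; ring.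
Qed.

Lemma Cinv_neq_0 (x : C) : x <> 0 -> / x <> 0.
Proof. intros Hx H. apply C1_nz. rewrite <- (Cinv_l x Hx), H. ring. Qed.

Lemma Cinv_mult_all (x y : C) : / (x * y) = / x * / y.
Proof.
  destruct (Ceq_dec x 0) as [->|Hx]. { rewrite Cmult_0_l, Cinv0; ring. }
  destruct (Ceq_dec y 0) as [->|Hy]. { rewrite Cmult_0_r, Cinv0; ring. }
  field. split; auto.
Qed.

Lemma Cdiv_mult_all (x y u v : C) : (x * y) / (u * v) = (x / u) * (y / v).
Proof. unfold Cdiv. rewrite Cinv_mult_all. ring. Qed.

Lemma prodC_app {A} (l1 l2 : list A) (f : A -> C) : prodC (l1 ++ l2) f = prodC l1 f * prodC l2 f.
Proof. induction l1; simpl. ring. rewrite IHl1. ring. Qed.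

Lemma prodC_ext {A} (l : list A) (f g : A -> C) : (forall x, In x l -> f x = g x) -> prodC l f = prodC l g.
Proof. induction l; simpl; intros H. auto. rewrite H by auto. rewrite IHl; auto. Qed.

Lemma prodC_mult {A} (l : list A) (f g : A -> C) : prodC l (fun x => f x * g x) = prodC l f * prodC l g.
Proof. induction l; simpl. ring. rewrite IHl. ring. Qed.

Lemma prodC_inv {A} (l : list A) (f : A -> C) : prodC l (fun x => / f x) = / prodC l f.
Proof. induction l; simpl. unfold Cinv; simpl; apply injective_projections; simpl; field.
  rewrite IHl, Cinv_mult_all. auto. Qed.

Lemma prodC_div {A} (l : list A) (f g : A -> C) : prodC l (fun x => f x / g x) = prodC l f / prodC l g.
Proof. unfold Cdiv. rewrite prodC_mult, prodC_inv. auto. Qed.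

Lemma prodC_map {A B} (l : list A) (h : A -> B) (f : B -> C) : prodC (map h l) f = prodC l (fun x => f (h x)).
Proof. induction l; simpl; auto. rewrite IHl; auto. Qed.

Lemma prodC_one {A} (l : list A) (f : A -> C) : (forall x, In x l -> f x = 1) -> prodC l f = 1.
Proof. induction l; simpl; intros H; auto. rewrite H by auto. rewrite IHl; auto. ring. Qed.

Lemma prodC_zero {A} (l : list A) (f : A -> C) (x : A) : In x l -> f x = 0 -> prodC l f = 0.
Proof. induction l; simpl; intros Hin H. contradiction. destruct Hin as [->|Hi]. rewrite H; ring. rewrite (IHl Hi H); ring. Qed.

Lemma prodC_nz {A} (l : list A) (f : A -> C) : (forall x, In x l -> f x <> 0) -> prodC l f <> 0.
Proof. induction l; simpl; intros H. apply C1_nz. apply Cmult_neq_0. apply H; auto. apply IHl; auto. Qed.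

Lemma prodC_const {A} (l : list A) (c : C) : prodC l (fun _ => c) = cpow c (length l).
Proof. induction l; simpl; auto. rewrite IHl; auto. Qed.

Lemma seq_S_r s n : seq s (S n) = seq s n ++ [s + n]%nat.
Proof. rewrite seq_S. auto. Qed.

Lemma prodC_seq_S_r s n (f : nat -> C) : prodC (seq s (S n)) f = prodC (seq s n) f * f (s + n)%nat.
Proof. rewrite seq_S_r, prodC_app. simpl. ring. Qed.

Lemma prodC_seq_shift s n (f : nat -> C) : prodC (seq (S s) n) f = prodC (seq s n) (fun i => f (S i)).
Proof. rewrite <- seq_shift, prodC_map. auto. Qed.

Lemma prodC_seq_trim s m n (f : nat -> C) : (m <= n)%nat -> (forall i, (s + m <= i)%nat -> f i = 1) ->
  prodC (seq s n) f = prodC (seq s m) f.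
Proof.
  intros Hmn H. replace n with (m + (n - m))%nat by lia. rewrite seq_app, prodC_app.
  rewrite (prodC_one (seq (s + m) _)). ring. intros x Hx. apply in_seq in Hx. apply H. lia.
Qed.

Lemma prodC_tele (f : nat -> C) s n : (forall i, (s <= i <= s + n)%nat -> f i <> 0) ->
  prodC (seq s n) (fun i => f i / f (S i)) = f s / f (s + n)%nat.
Proof.
  induction n; intros H. simpl. rewrite Nat.add_0_r. field. apply H; lia.
  rewrite prodC_seq_S_r, IHn by (intros; apply H; lia).
  replace (s + S n)%nat with (S (s + n)) by lia. field. repeat split; apply H; lia.
Qed.

Lemma sumC_zero {A} (l : list A) (f : A -> C) : (forall x, In x l -> f x = 0) -> sumC l f = 0.
Proof. induction l; simpl; intros H; auto. rewrite H by auto. rewrite IHl; auto. ring. Qed.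

Lemma sumC_single {A} (l : list A) (f : A -> C) (x0 : A) : NoDup l -> In x0 l ->
  (forall x, In x l -> x <> x0 -> f x = 0) -> sumC l f = f x0.
Proof.
  induction l as [|y l IH]; simpl; intros Hnd Hin H. contradiction.
  inversion Hnd; subst. destruct Hin as [<-|Hin].
  - rewrite sumC_zero. ring. intros x Hx. apply H; auto. intros ->. contradiction.
  - rewrite H; auto. rewrite IH; auto. ring. intros ->. contradiction.
Qed.

Lemma cpow_nz (x : C) n : x <> 0 -> cpow x n <> 0.
Proof. intros H; induction n; simpl. apply C1_nz. apply Cmult_neq_0; [exact H|exact IHn]. Qed.

Lemma cpow_add (x : C) m n : cpow x (m + n) = cpow x m * cpow x n.
Proof. induction m; simpl. ring. rewrite IHm. ring. Qed.

Lemma cpow_mult_l (x y : C) n : cpow (x * y) n = cpow x n * cpow y n.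
Proof. induction n; simpl. ring. rewrite IHn. ring. Qed.

Lemma zpow_of_nat (x : C) n : zpow x (Z.of_nat n) = cpow x n.
Proof. destruct n. auto. simpl. rewrite SuccNat2Pos.id_succ. auto. Qed.

Lemma zpow_nz (x : C) z : x <> 0 -> zpow x z <> 0.
Proof. intros H; destruct z; simpl. apply C1_nz. apply cpow_nz; auto.
  apply Cinv_neq_0. apply cpow_nz; auto. Qed.

Lemma zpow_neg_nat (x : C) n : zpow x (- Z.of_nat n) = / cpow x n.
Proof. destruct n. simpl. unfold Cinv; simpl; apply injective_projections; simpl; field.
  simpl. rewrite SuccNat2Pos.id_succ. auto. Qed.

Lemma zpow_succ (x : C) z : x <> 0 -> zpow x (Z.succ z) = zpow x z * x.
Proof.
  intros Hx. destruct (Z_lt_le_dec z 0) as [Hz|Hz].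
  - destruct (Z.eq_dec z (-1)) as [->|Hz1]. simpl. field. auto.
    replace z with (- Z.of_nat (S (Z.to_nat (- z - 1))))%Z by lia.
    replace (Z.succ (- Z.of_nat (S (Z.to_nat (- z - 1)))))%Z with (- Z.of_nat (Z.to_nat (- z - 1)))%Z by lia.
    rewrite !zpow_neg_nat. simpl. field. split; auto. apply cpow_nz; auto.
  - replace z with (Z.of_nat (Z.to_nat z)) by lia.
    replace (Z.succ (Z.of_nat (Z.to_nat z))) with (Z.of_nat (S (Z.to_nat z))) by lia.
    rewrite !zpow_of_nat. simpl. ring.
Qed.

Lemma zpow_pred (x : C) z : x <> 0 -> zpow x (Z.pred z) = zpow x z / x.
Proof.
  intros Hx. rewrite <- (Z.succ_pred z) at 2. rewrite zpow_succ by auto. field. auto.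
Qed.

Lemma zpow_add (x : C) m n : x <> 0 -> zpow x (m + n) = zpow x m * zpow x n.
Proof.
  intros Hx. induction n using Z.peano_ind.
  - rewrite Z.add_0_r. simpl. ring.
  - rewrite Z.add_succ_r, !zpow_succ, IHn by auto. ring.
  - rewrite Z.add_pred_r, !zpow_pred, IHn by auto. field. auto.
Qed.

Lemma zpow_opp (x : C) z : x <> 0 -> zpow x (- z) = / zpow x z.
Proof.
  intros Hx. assert (H := zpow_add x z (- z) Hx). rewrite Z.add_opp_diag_r in H. simpl in H.
  assert (zpow x z <> 0) by (apply zpow_nz; auto).
  replace (zpow x (- z)) with (/ zpow x z * (zpow x z * zpow x (- z))) by (field; auto).
  rewrite <- H. simpl. ring.
Qed.

Lemma zpow_sub (x : C) m n : x <> 0 -> zpow x (m - n) = zpow x m / zpow x n.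
Proof. intros Hx. unfold Z.sub. rewrite zpow_add, zpow_opp by auto. auto. Qed.

Lemma zpow_1 (x : C) : zpow x 1 = x.
Proof. simpl. ring. Qed.
Lemma zpow_0 (x : C) : zpow x 0 = 1.
Proof. auto. Qed.

Lemma zpow_mul_nat (x : C) z n : x <> 0 -> zpow x (z * Z.of_nat n) = cpow (zpow x z) n.
Proof.
  intros Hx. induction n. rewrite Z.mul_0_r. auto.
  replace (z * Z.of_nat (S n))%Z with (z + z * Z.of_nat n)%Z by lia.
  rewrite zpow_add, IHn by auto. auto.
Qed.

Lemma pow_decr (r : R) n m : (0 <= r <= 1)%R -> (n <= m)%nat -> (r ^ m <= r ^ n)%R.
Proof.
  intros Hr H. induction H. lra. simpl. assert (0 <= r ^ m)%R by (apply pow_le; lra). nra.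
Qed.

Lemma geom_cauchy (u : nat -> R) (K r : R) : (0 <= K)%R -> (0 <= r < 1)%R ->
  (forall n, Rabs (u (S n) - u n) <= K * r ^ n)%R -> ex_finite_lim_seq u.
Proof.
  intros HK Hr Hd. apply ex_lim_seq_cauchy_corr. intros eps.
  assert (Hb : forall n m, (n <= m)%nat -> (Rabs (u m - u n) <= K * (r ^ n - r ^ m) / (1 - r))%R).
  { intros n m Hnm. induction Hnm.
    - rewrite Rminus_diag, Rabs_R0. unfold Rdiv. rewrite Rminus_diag. lra.
    - replace (u (S m) - u n)%R with ((u (S m) - u m) + (u m - u n))%R by ring.
      eapply Rle_trans. apply Rabs_triang. specialize (Hd m).
      replace (K * (r ^ n - r ^ S m) / (1 - r))%R with
        (K * r ^ m + K * (r ^ n - r ^ m) / (1 - r))%R by (simpl; field; lra). lra. }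
  assert (Hb' : forall n m, (n <= m)%nat -> (Rabs (u m - u n) <= K * r ^ n / (1 - r))%R).
  { intros n m Hnm. eapply Rle_trans. apply Hb; auto. unfold Rdiv.
    apply Rmult_le_compat_r. apply Rlt_le, Rinv_0_lt_compat. lra.
    apply Rmult_le_compat_l; auto. assert (0 <= r ^ m)%R by (apply pow_le; lra). lra. }
  destruct (pow_lt_1_zero r ltac:(rewrite Rabs_pos_eq; lra) (eps * (1 - r) / (K + 1))%R) as [N HN].
  { apply Rdiv_lt_0_compat. destruct eps; simpl; nra. lra. }
  assert (Hrn : forall j, (N <= j)%nat -> (K * r ^ j / (1 - r) < eps)%R).
  { intros j Hj. specialize (HN j Hj). rewrite Rabs_pos_eq in HN by (apply pow_le; lra).
    destruct eps as [e He]; simpl in *.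
    apply (Rmult_lt_reg_r (1 - r)). lra. unfold Rdiv. rewrite Rmult_assoc, Rinv_l, Rmult_1_r by lra.
    apply (Rmult_lt_compat_r (K + 1)) in HN; [|lra]. unfold Rdiv in HN.
    rewrite Rmult_assoc, Rinv_l, Rmult_1_r in HN by lra.
    assert (0 <= r ^ j)%R by (apply pow_le; lra). nra. }
  exists N. intros n m Hn Hm.
  destruct (le_lt_dec n m) as [H|H].
  - rewrite Rabs_minus_sym. eapply Rle_lt_trans. apply Hb'; auto. auto.
  - eapply Rle_lt_trans. apply Hb'; lia. auto.
Qed.

Lemma Cmod_cpow (x : C) n : Cmod (cpow x n) = (Cmod x ^ n)%R.
Proof. induction n; simpl. apply Cmod_1. rewrite Cmod_mult, IHn. auto. Qed.

Lemma qpoch_part_Sr x p N : qpoch_part x p (S N) = qpoch_part x p N * (1 - x * cpow p N).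
Proof. unfold qpoch_part. rewrite prodC_seq_S_r. auto. Qed.

Lemma qpoch_part_S x p N : qpoch_part x p (S N) = (1 - x) * qpoch_part (p * x) p N.
Proof.
  unfold qpoch_part. simpl seq. simpl prodC at 1. rewrite prodC_seq_shift.
  f_equal. ring. apply prodC_ext. intros i _. simpl. ring.
Qed.

Lemma qpoch_bound x p : (Cmod p < 1)%R -> forall N,
  (Cmod (qpoch_part x p N) <= exp (Cmod x / (1 - Cmod p)))%R.
Proof.
  intros Hp. set (r := Cmod p). set (X := Cmod x).
  assert (Hr : (0 <= r)%R) by apply Cmod_ge_0. assert (HX : (0 <= X)%R) by apply Cmod_ge_0.
  assert (Hr1 : (r < 1)%R) by (unfold r; lra).
  assert (H : forall N, (Cmod (qpoch_part x p N) <= exp (X * (1 - r ^ N) / (1 - r)))%R).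
  { induction N.
    - simpl. unfold qpoch_part. simpl. rewrite Cmod_1. replace (X * (1 - 1) / (1 - r))%R with 0%R by (field; lra).
      rewrite exp_0. lra.
    - rewrite qpoch_part_Sr, Cmod_mult.
      assert (H1 : (Cmod (1 - x * cpow p N) <= 1 + X * r ^ N)%R).
      { unfold Cminus. eapply Rle_trans. apply Cmod_triangle. rewrite Cmod_1, Cmod_opp, Cmod_mult, Cmod_cpow. unfold X, r. lra. }
      eapply Rle_trans. apply Rmult_le_compat; try apply Cmod_ge_0. apply IHN. apply H1.
      eapply Rle_trans. apply Rmult_le_compat_l. apply Rlt_le, exp_pos. apply exp_ineq1_le.
      rewrite <- exp_plus.  
      apply Req_le. f_equal. simpl. field. lra. }
  intros N. eapply Rle_trans. apply H.
  destruct (Req_dec (X * (1 - r ^ N) / (1 - r)) (X / (1 - r))) as [E|E]. rewrite E; lra.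
  apply Rlt_le, exp_increasing. unfold Rdiv.
  assert (0 <= r ^ N)%R by (apply pow_le; lra).
  assert (0 < / (1 - r))%R by (apply Rinv_0_lt_compat; lra).
  assert (X * (1 - r ^ N) * / (1 - r) <= X * / (1 - r))%R.
  { apply Rmult_le_compat_r. lra. nra. }
  unfold Rdiv in E. lra.
Qed.

Lemma im_le_Cmod (c : C) : (Rabs (Im c) <= Cmod c)%R.
Proof.
  replace (Im c) with (Re (c * - Ci)) by (unfold Re, Im, Ci; simpl; ring).
  eapply Rle_trans. apply re_le_Cmod. rewrite Cmod_mult, Cmod_opp, Cmod_Ci. lra.
Qed.

Lemma qpoch_conv x p : (Cmod p < 1)%R ->
  ex_finite_lim_seq (fun N => Re (qpoch_part x p N)) /\ ex_finite_lim_seq (fun N => Im (qpoch_part x p N)).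
Proof.
  intros Hp. set (B := exp (Cmod x / (1 - Cmod p))).
  assert (Hd : forall N, (Cmod (qpoch_part x p (S N) - qpoch_part x p N) <= (B * Cmod x) * Cmod p ^ N)%R).
  { intros N. rewrite qpoch_part_Sr.
    replace (qpoch_part x p N * (1 - x * cpow p N) - qpoch_part x p N) with
      (- (qpoch_part x p N * x * cpow p N)) by ring.
    rewrite Cmod_opp, !Cmod_mult, Cmod_cpow. rewrite !Rmult_assoc.
    apply Rmult_le_compat_r. apply Rmult_le_pos; [apply Cmod_ge_0| apply pow_le, Cmod_ge_0].
    apply qpoch_bound; auto. }
  assert (HK : (0 <= B * Cmod x)%R) by (apply Rmult_le_pos; [apply Rlt_le, exp_pos|apply Cmod_ge_0]).
  assert (Hr : (0 <= Cmod p < 1)%R) by (split; [apply Cmod_ge_0|auto]).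
  split; apply (geom_cauchy _ (B * Cmod x) (Cmod p)); auto; intros N;
    eapply Rle_trans; try apply (Hd N).
  - replace (Re (qpoch_part x p (S N)) - Re (qpoch_part x p N))%R with
      (Re (qpoch_part x p (S N) - qpoch_part x p N)) by (unfold Re, Im; simpl; ring). apply re_le_Cmod.
  - replace (Im (qpoch_part x p (S N)) - Im (qpoch_part x p N))%R with
      (Im (qpoch_part x p (S N) - qpoch_part x p N)) by (unfold Re, Im; simpl; ring). apply im_le_Cmod.
Qed.

Lemma qpoch_inf_shift x p : (Cmod p < 1)%R -> qpoch_inf x p = (1 - x) * qpoch_inf (p * x) p.
Proof.
  intros Hp. destruct (qpoch_conv (p * x) p Hp) as [[v H1] [w H2]].
  assert (HA : Lim_seq (fun N => Re (qpoch_part x p N)) = Finite (Re (1 - x) * v - Im (1 - x) * w)%R).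
  { rewrite <- Lim_seq_incr_1. apply is_lim_seq_unique.
    replace (Re (1 - x) * v - Im (1 - x) * w)%R with (Re (1 - x) * v + (- Im (1 - x)) * w)%R by ring.
    apply (is_lim_seq_ext (fun N => Re (1 - x) * Re (qpoch_part (p * x) p N) + (- Im (1 - x)) * Im (qpoch_part (p * x) p N))%R).
    { intros N. rewrite qpoch_part_S. unfold Re, Im; simpl; ring. }
    apply is_lim_seq_plus'. exact (is_lim_seq_scal_l _ _ _ H1). exact (is_lim_seq_scal_l _ _ _ H2). }
  assert (HB : Lim_seq (fun N => Im (qpoch_part x p N)) = Finite (Re (1 - x) * w + Im (1 - x) * v)%R).
  { rewrite <- Lim_seq_incr_1. apply is_lim_seq_unique.
    apply (is_lim_seq_ext (fun N => Re (1 - x) * Im (qpoch_part (p * x) p N) + Im (1 - x) * Re (qpoch_part (p * x) p N))%R).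
    { intros N. rewrite qpoch_part_S. unfold Re, Im; simpl; ring. }
    apply is_lim_seq_plus'. exact (is_lim_seq_scal_l _ _ _ H2). exact (is_lim_seq_scal_l _ _ _ H1). }
  unfold qpoch_inf. rewrite HA, HB, (is_lim_seq_unique _ _ H1), (is_lim_seq_unique _ _ H2).
  apply injective_projections; unfold Re, Im; simpl; ring.
Qed.

Lemma theta_refl (p x : C) : (Cmod p < 1)%R -> x <> 0 -> theta p (/ x) = - (/ x) * theta p x.
Proof.
  intros Hp Hx. unfold theta.
  rewrite (qpoch_inf_shift (/ x) p Hp), (qpoch_inf_shift x p Hp).
  assert (Hix : / x <> 0) by (apply Cinv_neq_0; auto).
  replace (p / / x) with (p * x) by (field; auto). unfold Cdiv. field. auto.
Qed.

Lemma qpoch_inf_one p : qpoch_inf 1 p = 0.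
Proof.
  unfold qpoch_inf.
  assert (H1 : Lim_seq (fun N => Re (qpoch_part 1 p N)) = Finite 0).
  { rewrite <- Lim_seq_incr_1. rewrite <- (Lim_seq_const 0). apply Lim_seq_ext. intros N.
    rewrite qpoch_part_S. replace (1 - 1 : C) with (0 : C) by ring. rewrite Cmult_0_l. auto. }
  assert (H2 : Lim_seq (fun N => Im (qpoch_part 1 p N)) = Finite 0).
  { rewrite <- Lim_seq_incr_1. rewrite <- (Lim_seq_const 0). apply Lim_seq_ext. intros N.
    rewrite qpoch_part_S. replace (1 - 1 : C) with (0 : C) by ring. rewrite Cmult_0_l. auto. }
  rewrite H1, H2. auto.
Qed.

Lemma theta_one p : theta p 1 = 0.
Proof. unfold theta. rewrite qpoch_inf_one. ring. Qed.

Lemma zpow_2mul (x : C) z : x <> 0 -> zpow x (2 * z) = zpow x z * zpow x z.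
Proof. intros Hx. replace (2 * z)%Z with (z + z)%Z by lia. apply zpow_add; auto. Qed.

Ltac zsimpl := repeat (first [rewrite zpow_add by assumption | rewrite zpow_sub by assumption
  | rewrite zpow_opp by assumption | rewrite zpow_2mul by assumption | rewrite zpow_1 | rewrite zpow_0]).

Section Alg.
Variables (p q t a b : C).
Hypotheses (Hp : (Cmod p < 1)%R) (Hq : q <> 0) (Ht : t <> 0) (Ha : a <> 0) (Hb : b <> 0).

Definition mon (i j k l : Z) : C := zpow q i * zpow t j * zpow a k * zpow b l.
Definition E (i j k l : Z) (m : nat) : C := esf_nat p q (mon i j k l) m.
Definition MP (i j k l : Z) (m : nat) : C := prodC (seq 0 m) (fun s => - mon (i + Z.of_nat s) j k l).

Lemma mon_nz i j k l : mon i j k l <> 0.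
Proof. unfold mon. repeat apply Cmult_neq_0; apply zpow_nz; auto. Qed.

Lemma mon_mul i j k l i' j' k' l' : mon i j k l * mon i' j' k' l' = mon (i + i') (j + j') (k + k') (l + l').
Proof. unfold mon. zsimpl. ring. Qed.

Lemma mon_inv i j k l : / mon i j k l = mon (- i) (- j) (- k) (- l).
Proof. unfold mon. zsimpl. field. repeat split; apply zpow_nz; auto. Qed.

Lemma mon_q i j k l s : mon i j k l * cpow q s = mon (i + Z.of_nat s) j k l.
Proof. unfold mon. rewrite zpow_add by auto. rewrite zpow_of_nat. ring. Qed.

Lemma E_def i j k l m : E i j k l m = prodC (seq 0 m) (fun s => theta p (mon (i + Z.of_nat s) j k l)).
Proof. unfold E, esf_nat. apply prodC_ext. intros s _. rewrite mon_q. auto. Qed.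

Lemma E_0 i j k l : E i j k l 0 = 1.
Proof. auto. Qed.

Lemma E_Sr i j k l m : E i j k l (S m) = E i j k l m * theta p (mon (i + Z.of_nat m) j k l).
Proof. rewrite !E_def, prodC_seq_S_r. auto. Qed.

Lemma E_Sl i j k l m : E i j k l (S m) = theta p (mon i j k l) * E (i + 1) j k l m.
Proof.
  rewrite !E_def. simpl seq. simpl prodC at 1. rewrite prodC_seq_shift. rewrite Z.add_0_r.
  f_equal. apply prodC_ext. intros s _. f_equal. f_equal. lia.
Qed.

Lemma E_add i j k l m n : E i j k l (m + n) = E i j k l m * E (i + Z.of_nat m) j k l n.
Proof.
  induction n. rewrite Nat.add_0_r, E_0. ring.
  rewrite Nat.add_succ_r, !E_Sr, IHn. rewrite Cmult_assoc. f_equal. f_equal. f_equal. lia.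
Qed.

Hypothesis Hgen : forall i j k l : Z, (i, j, k, l) <> (0%Z, 0%Z, 0%Z, 0%Z) -> theta p (mon i j k l) <> 0.

Lemma th_nz i j k l : (j <> 0 \/ k <> 0 \/ l <> 0 \/ i <> 0)%Z -> theta p (mon i j k l) <> 0.
Proof. intros H. apply Hgen. intros E'. injection E'. lia. Qed.

Lemma E_nz i j k l m : (j <> 0 \/ k <> 0 \/ l <> 0 \/ 0 < i \/ i + Z.of_nat m <= 0)%Z -> E i j k l m <> 0.
Proof.
  intros H. rewrite E_def. apply prodC_nz. intros s Hs. apply in_seq in Hs. apply th_nz. lia.
Qed.

Lemma theta_mon_refl i j k l : theta p (mon i j k l) = - mon i j k l * theta p (mon (- i) (- j) (- k) (- l)).
Proof.
  rewrite <- mon_inv. rewrite theta_refl by (try exact Hp; apply mon_nz).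
  field. apply mon_nz.
Qed.

Lemma MP_nz i j k l m : MP i j k l m <> 0.
Proof. apply prodC_nz. intros s _. intros H. apply (mon_nz (i + Z.of_nat s) j k l).
  replace (mon (i + Z.of_nat s) j k l) with (- - mon (i + Z.of_nat s) j k l) by ring. rewrite H. ring. Qed.

Lemma MP_Sr i j k l m : MP i j k l (S m) = MP i j k l m * - mon (i + Z.of_nat m) j k l.
Proof. unfold MP. rewrite prodC_seq_S_r. auto. Qed.

Lemma E_refl i j k l m : E i j k l m = MP i j k l m * E (1 - i - Z.of_nat m) (- j) (- k) (- l) m.
Proof.
  induction m. unfold MP. simpl. rewrite !E_0. ring.
  rewrite E_Sr, MP_Sr, IHm, E_Sl, theta_mon_refl.
  replace (1 - i - Z.of_nat (S m) + 1)%Z with (1 - i - Z.of_nat m)%Z by lia.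
  replace (- (i + Z.of_nat m))%Z with (1 - i - Z.of_nat (S m))%Z by lia. ring.
Qed.

End Alg.

Section Core.
Variables (p q t a b : C).
Hypotheses (Hp : (Cmod p < 1)%R) (Hq : q <> 0) (Ht : t <> 0) (Ha : a <> 0) (Hb : b <> 0).
Hypothesis Hgen : forall i j k l : Z, (i, j, k, l) <> (0%Z, 0%Z, 0%Z, 0%Z) -> theta p (mon q t a b i j k l) <> 0.

Local Notation mon := (mon q t a b).
Local Notation E := (E p q t a b).
Local Notation MP := (MP q t a b).

Lemma E_ext i j k l m i' j' k' l' m' : i = i' -> j = j' -> k = k' -> l = l' -> m = m' ->
  E i j k l m = E i' j' k' l' m'.
Proof. intros; subst; auto. Qed.

Lemma MP_ext i j k l m i' j' k' l' m' : i = i' -> j = j' -> k = k' -> l = l' -> m = m' ->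
  MP i j k l m = MP i' j' k' l' m'.
Proof. intros; subst; auto. Qed.

Lemma mon_ext i j k l i' j' k' l' : i = i' -> j = j' -> k = k' -> l = l' -> mon i j k l = mon i' j' k' l'.
Proof. intros; subst; auto. Qed.

Lemma E_nz' i j k l m : (j <> 0 \/ k <> 0 \/ l <> 0 \/ 0 < i \/ i + Z.of_nat m <= 0)%Z -> E i j k l m <> 0.
Proof. apply E_nz; auto. Qed.

Lemma MP_split0 i j k l m : MP i j k l m = MP i 0 0 0 m * mon 0 (j * Z.of_nat m) (k * Z.of_nat m) (l * Z.of_nat m).
Proof.
  induction m. unfold MP, mon. simpl. rewrite !Z.mul_0_r. simpl. ring.
  rewrite !MP_Sr, IHm.
  assert (Hm : mon (i + Z.of_nat m) j k l = mon (i + Z.of_nat m) 0 0 0 * mon 0 j k l)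
    by (rewrite mon_mul by auto; apply mon_ext; lia).
  assert (Hm2 : mon 0 (j * Z.of_nat (S m)) (k * Z.of_nat (S m)) (l * Z.of_nat (S m)) =
     mon 0 (j * Z.of_nat m) (k * Z.of_nat m) (l * Z.of_nat m) * mon 0 j k l)
    by (rewrite mon_mul by auto; apply mon_ext; lia).
  rewrite Hm, Hm2. ring.
Qed.

Lemma MP_add i j k l m n : MP i j k l (m + n) = MP i j k l m * MP (i + Z.of_nat m) j k l n.
Proof.
  induction n. rewrite Nat.add_0_r. unfold MP at 3. simpl. ring.
  rewrite Nat.add_succ_r, !MP_Sr, IHn. rewrite Cmult_assoc. f_equal. f_equal. apply mon_ext; lia.
Qed.

Lemma MP_shift i j k l m : MP i j k l m = MP (i + 1) j k l m * cpow (mon (-1) 0 0 0) m.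
Proof.
  induction m. unfold MP. simpl. ring.
  rewrite !MP_Sr, IHm. simpl. replace (mon (i + Z.of_nat m) j k l) with (mon (i + 1 + Z.of_nat m) j k l * mon (-1) 0 0 0).
  ring. rewrite mon_mul by auto. apply mon_ext; lia.
Qed.

Lemma cpow_mon i j k l n : cpow (mon i j k l) n = mon (i * Z.of_nat n) (j * Z.of_nat n) (k * Z.of_nat n) (l * Z.of_nat n).
Proof.
  induction n. unfold mon; simpl. rewrite !Z.mul_0_r. simpl. ring.
  simpl cpow. rewrite IHn, mon_mul by auto. apply mon_ext; lia.
Qed.

Variables (K N : nat) (A : nat -> nat).
Hypotheses (HA1 : A 1%nat = N) (Hdec : forall i, (1 <= i)%nat -> (A (S i) <= A i)%nat)
  (Hz : forall i, (K + 2 <= i)%nat -> A i = 0%nat).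

Local Notation B i := (A (S i)).
Local Notation zN := (Z.of_nat N).
Local Notation zK := (Z.of_nat K).

Lemma A_le_N i : (1 <= i)%nat -> (A i <= N)%nat.
Proof.
  intros Hi. induction i. lia. destruct i. lia. specialize (Hdec (S i) ltac:(lia)). specialize (IHi ltac:(lia)). lia.
Qed.

Definition ER1 i := E (Z.of_nat (B i) - zN) (1 - Z.of_nat i) 0 0 (A i - B i).
Definition ER2 i := E (zN + Z.of_nat (B i)) (2 * zK + 1 - Z.of_nat i) 1 0 (A i - B i).
Definition EP3 i := E (1 + zN) (zK - Z.of_nat i) 0 1 (B i).
Definition EP4 i := E (1 - zN) (- zK - Z.of_nat i) (-1) 1 (B i).
Definition EP5 i := E (1 + zN) (zK + 1 - Z.of_nat i) 0 1 (A i).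
Definition EP6 i := E (1 - zN) (1 - zK - Z.of_nat i) (-1) 1 (A i).
Definition S1 := E 1 zK 0 1 N * E 1 zK 0 0 N * E 0 (2 * zK) 1 0 (2 * N)
   / (E 0 zK 1 (-1) N * E 0 zK 1 0 N * E 1 zK 0 1 (2 * N)) * zpow t (zK * zN).
Definition Rw j := E 1 (Z.of_nat j - 1) 0 0 (N - B j) * E 0 (2 * zK - Z.of_nat j) 1 0 (N + B j)
   / (E 1 (Z.of_nat j) 0 0 (N - B j) * E 0 (2 * zK + 1 - Z.of_nat j) 1 0 (N + B j)).

Lemma step1 : prodC (seq 1 (S K)) EP5 = EP5 1 * prodC (seq 1 K) EP3.
Proof.
  simpl seq. simpl prodC at 1. rewrite prodC_seq_shift. f_equal. apply prodC_ext. intros i _.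
  unfold EP5, EP3. apply E_ext; lia.
Qed.

Lemma step1' : prodC (seq 1 (S K)) EP6 = EP6 1 * prodC (seq 1 K) EP4.
Proof.
  simpl seq. simpl prodC at 1. rewrite prodC_seq_shift. f_equal. apply prodC_ext. intros i _.
  unfold EP6, EP4. apply E_ext; lia.
Qed.


Definition G i := E 0 (2 * zK + 1 - Z.of_nat i) 1 0 (N + A i).
Definition H i := E 0 (2 * zK + 1 - Z.of_nat i) 1 0 (N + B i).
Definition F i := E 1 (Z.of_nat i - 1) 0 0 (N - B i).
Definition F' i := E 1 (Z.of_nat i - 1) 0 0 (N - A i).
Definition Q m := MP (- zN) 0 0 0 m.

Lemma H_nz i : H i <> 0.
Proof. unfold H. apply E_nz'. lia. Qed.
Lemma F'_nz i : F' i <> 0.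
Proof. unfold F'. apply E_nz'. lia. Qed.
Lemma Q_nz m : Q m <> 0.
Proof. unfold Q. apply MP_nz; assumption. Qed.

Lemma ER2_eq i : (1 <= i)%nat -> ER2 i = G i / H i.
Proof.
  intros Hi. assert (HBA := Hdec i Hi).
  assert (G i = H i * ER2 i).
  { unfold G, H, ER2. replace (N + A i)%nat with ((N + B i) + (A i - B i))%nat by lia.
    rewrite E_add by assumption. f_equal. apply E_ext; lia. }
  rewrite H0. field. apply H_nz.
Qed.

Lemma ER1_eq i : (1 <= i)%nat -> ER1 i = MP (Z.of_nat (B i) - zN) (1 - Z.of_nat i) 0 0 (A i - B i) * (F i / F' i).
Proof.
  intros Hi. assert (HBA := Hdec i Hi). assert (HAN := A_le_N i Hi).
  unfold ER1. rewrite E_refl by assumption. f_equal.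
  assert (F i = F' i * E (1 + Z.of_nat (N - A i)) (Z.of_nat i - 1) 0 0 (A i - B i)).
  { unfold F, F'. replace (N - B i)%nat with ((N - A i) + (A i - B i))%nat by lia.
    rewrite E_add by assumption. f_equal. }
  rewrite H0. transitivity (E (1 + Z.of_nat (N - A i)) (Z.of_nat i - 1) 0 0 (A i - B i)).
  apply E_ext; lia. field. apply F'_nz.
Qed.

Lemma prod_first (f : nat -> C) n : prodC (seq 1 (S n)) f = f 1%nat * prodC (seq 1 n) (fun j => f (S j)).
Proof. simpl seq. simpl prodC at 1. rewrite prodC_seq_shift. auto. Qed.

Lemma prod_last (f : nat -> C) n : prodC (seq 1 (S n)) f = prodC (seq 1 n) f * f (S n).
Proof. rewrite prodC_seq_S_r. auto. Qed.

Lemma prodER2 : prodC (seq 1 (S K)) ER2 = G 1 * prodC (seq 1 K) (fun j => G (S j) / H j) / H (S K).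
Proof.
  rewrite (prodC_ext _ ER2 (fun i => G i / H i)).
  2:{ intros i Hi. apply in_seq in Hi. apply ER2_eq. lia. }
  rewrite !prodC_div. rewrite prod_first with (f := G), prod_last with (f := H).
  field. repeat split; try apply H_nz; apply prodC_nz; intros; apply H_nz.
Qed.

Lemma prodER1 : prodC (seq 1 (S K)) ER1 =
  prodC (seq 1 (S K)) (fun i => MP (Z.of_nat (B i) - zN) (1 - Z.of_nat i) 0 0 (A i - B i)) *
  (prodC (seq 1 K) (fun j => F j / F' (S j)) * F (S K)).
Proof.
  rewrite (prodC_ext _ ER1 (fun i => MP (Z.of_nat (B i) - zN) (1 - Z.of_nat i) 0 0 (A i - B i) * (F i / F' i))).
  2:{ intros i Hi. apply in_seq in Hi. apply ER1_eq. lia. }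
  rewrite prodC_mult. f_equal. rewrite !prodC_div.
  rewrite prod_last with (f := F), prod_first with (f := F'). assert (F' 1 = 1). { unfold F'. rewrite HA1, Nat.sub_diag. auto. }
  rewrite H0. field. apply prodC_nz. intros; apply F'_nz.
Qed.

Lemma mono_step : prodC (seq 1 (S K)) (fun i => MP (Z.of_nat (B i) - zN) (1 - Z.of_nat i) 0 0 (A i - B i)) =
  MP (1 - zN) (- zK) (-1) 1 N * zpow t (zK * zN) * prodC (seq 1 K) (fun m => zpow t (- Z.of_nat (B m)))
  * cpow (a / (q * b)) N.
Proof.
  set (T := fun i => zpow t ((1 - Z.of_nat i) * Z.of_nat (A i))).
  rewrite (prodC_ext _ _ (fun i => (Q (A i) / Q (A (S i))) * (T i / T (S i) * zpow t (- Z.of_nat (B i))))).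
  2:{ intros i Hi. apply in_seq in Hi. assert (HBA := Hdec i ltac:(lia)).
      rewrite MP_split0 by auto. f_equal.
      - unfold Q. transitivity (MP (- zN) 0 0 0 (B i + (A i - B i)) / MP (- zN) 0 0 0 (B i)).
        + rewrite MP_add by assumption. field_simplify. apply MP_ext; lia. apply MP_nz; assumption.
        + do 3 f_equal. lia.
      - unfold T, mon. rewrite !zpow_0.
        replace ((1 - Z.of_nat i) * Z.of_nat (A i - B i))%Z with
          ((1 - Z.of_nat i) * Z.of_nat (A i) - (1 - Z.of_nat (S i)) * Z.of_nat (A (S i)) + - Z.of_nat (B i))%Z by (rewrite Nat2Z.inj_sub by lia; rewrite Nat2Z.inj_succ; ring).
        replace (0 * Z.of_nat (A i - B i))%Z with 0%Z by lia. rewrite ?zpow_0.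
        rewrite zpow_add, zpow_sub by auto. ring. }
  rewrite prodC_mult. rewrite prodC_tele. 2:{ intros. apply Q_nz. }
  rewrite prodC_mult. rewrite prodC_tele. 2:{ intros. apply zpow_nz; auto. }
  rewrite prodC_seq_S_r. simpl (1 + S K)%nat. simpl (1 + K)%nat.
  unfold T. rewrite HA1, !Hz by lia.
  replace ((1 - Z.of_nat 1) * Z.of_nat N)%Z with 0%Z by lia.
  replace ((1 - Z.of_nat (S (S K))) * Z.of_nat 0)%Z with 0%Z by lia. simpl (zpow t 0).
  replace (- Z.of_nat 0)%Z with 0%Z by lia. rewrite zpow_0.
  assert (Q 0 = 1) by auto. rewrite H0.
  unfold Q. rewrite MP_shift by auto. replace (- zN + 1)%Z with (1 - zN)%Z by lia.
  rewrite (MP_split0 (1 - zN) (- zK) (-1) 1 N) by assumption.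
  assert (Hc : cpow (mon (-1) 0 0 0) N = mon 0 (- zK * Z.of_nat N) (-1 * Z.of_nat N) (1 * Z.of_nat N) * zpow t (zK * zN) * cpow (a / (q * b)) N).
  { replace (a / (q * b)) with (mon (-1) 0 1 (-1)) by (unfold mon; zsimpl; simpl; field; split; auto).
    replace (zpow t (zK * zN)) with (mon 0 (zK * zN) 0 0) by (unfold mon; simpl; ring).
    rewrite !cpow_mon, !mon_mul by auto. apply mon_ext; ring. }
  rewrite Hc. idtac.
  field.
Qed.

Lemma EC : prodC (seq 1 (S K)) ER1 * prodC (seq 1 (S K)) ER2 * prodC (seq 1 K) EP3 * prodC (seq 1 K) EP4
   / (prodC (seq 1 (S K)) EP5 * prodC (seq 1 (S K)) EP6)
  = S1 * prodC (seq 1 K) (fun m => zpow t (- Z.of_nat (B m))) * cpow (a / (q * b)) N * prodC (seq 1 K) Rw.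
Proof.
  rewrite step1, step1', prodER1, prodER2, mono_step.
  rewrite (prodC_ext _ Rw (fun j => (F j / F' (S j)) * (G (S j) / H j))).
  2:{ intros j _. unfold Rw, F, F', G, H. rewrite Cdiv_mult_all. f_equal; f_equal; apply E_ext; lia. }
  rewrite prodC_mult.
  assert (E6 : EP6 1 = MP (1 - zN) (- zK) (-1) 1 N * E 0 zK 1 (-1) N).
  { unfold EP6. rewrite HA1, E_refl by assumption. f_equal; [apply MP_ext | apply E_ext]; lia. }
  assert (E5 : EP5 1 = E (1 + zN) zK 0 1 N).
  { unfold EP5. rewrite HA1. apply E_ext; lia. }
  assert (E2N : E 1 zK 0 1 (2 * N) = E 1 zK 0 1 N * E (1 + zN) zK 0 1 N).
  { replace (2 * N)%nat with (N + N)%nat by lia. rewrite E_add by assumption. f_equal. }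
  assert (G1 : G 1 = E 0 (2 * zK) 1 0 (2 * N)).
  { unfold G. rewrite HA1. apply E_ext; lia. }
  assert (HK : H (S K) = E 0 zK 1 0 N).
  { unfold H. rewrite Hz by lia. apply E_ext; lia. }
  assert (FK : F (S K) = E 1 zK 0 0 N).
  { unfold F. rewrite Hz by lia. apply E_ext; lia. }
  rewrite E6, E5, G1, HK, FK. unfold S1. rewrite E2N.
  assert (N3 : prodC (seq 1 K) EP3 <> 0).
  { apply prodC_nz. intros x _. unfold EP3. apply E_nz'. lia. }
  assert (N4 : prodC (seq 1 K) EP4 <> 0).
  { apply prodC_nz. intros x _. unfold EP4. apply E_nz'. lia. }
  assert (NF : prodC (seq 1 K) (fun j => F' (S j)) <> 0).
  { apply prodC_nz. intros x _. apply F'_nz. }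
  assert (NH : prodC (seq 1 K) H <> 0).
  { apply prodC_nz. intros x _. apply H_nz. }
  assert (NM : MP (1 - zN) (- zK) (-1) 1 N <> 0) by (apply MP_nz; assumption).
  assert (N6 : E 0 zK 1 (-1) N <> 0) by (apply E_nz'; lia).
  assert (N5 : E (1 + zN) zK 0 1 N <> 0) by (apply E_nz'; lia).
  assert (N0 : E 0 zK 1 0 N <> 0) by (apply E_nz'; lia).
  assert (N1 : E 1 zK 0 1 N <> 0) by (apply E_nz'; lia).
  rewrite !prodC_div. field. repeat split; auto.
Qed.

End Core.

Lemma part_cons_S (x : nat) l i : (1 <= i)%nat -> part (x :: l) (S i) = part l i.
Proof. intros Hi. unfold part. destruct i. lia. simpl. rewrite Nat.sub_0_r. auto. Qed.

Lemma part_cons_1 (x : nat) l : part (x :: l) 1 = x.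
Proof. auto. Qed.

Lemma part_nil i : part [] i = 0%nat.
Proof. unfold part. destruct (i - 1)%nat; auto. Qed.

Lemma part_repeat0 r i : part (repeat 0%nat r) i = 0%nat.
Proof. unfold part. apply nth_repeat. Qed.

Lemma part_app_repeat l r i : part (l ++ repeat 0%nat r) i = part l i.
Proof.
  unfold part. destruct (Nat.lt_ge_cases (i - 1) (length l)).
  rewrite app_nth1; auto. rewrite app_nth2, nth_repeat by auto. rewrite nth_overflow; auto.
Qed.

Lemma part_over l i : (length l < i)%nat -> part l i = 0%nat.
Proof. intros H. unfold part. apply nth_overflow. lia. Qed.

Definition dec (l : list nat) := forall i, (1 <= i)%nat -> (part l (S i) <= part l i)%nat.

Lemma is_partition_dec l : is_partition l -> dec l.
Proof.
  intros H i Hi. destruct (Nat.lt_ge_cases i (length l)). apply H; lia.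
  rewrite (part_over l (S i)) by lia. lia.
Qed.

Lemma dec_cons x l : dec (x :: l) -> dec l /\ (part l 1 <= x)%nat.
Proof.
  intros H. split. intros i Hi. specialize (H (S i) ltac:(lia)). rewrite !part_cons_S in H by lia. auto.
  specialize (H 1%nat ltac:(lia)). rewrite part_cons_S in H by lia. auto.
Qed.

Lemma dec_app_repeat l r : dec l -> dec (l ++ repeat 0%nat r).
Proof. intros H i Hi. rewrite !part_app_repeat. auto. Qed.

Lemma dec_cons_intro x l : dec l -> (part l 1 <= x)%nat -> dec (x :: l).
Proof.
  intros H H1 i Hi. destruct i. lia. destruct i. rewrite part_cons_S, part_cons_1 by lia. auto.
  rewrite !part_cons_S by lia. apply H. lia.
Qed.

Lemma part_eq_list (l1 l2 : list nat) : length l1 = length l2 -> (forall i, (1 <= i)%nat -> part l1 i = part l2 i) -> l1 = l2.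
Proof.
  revert l2. induction l1; intros [|y l2] Hl H; simpl in Hl; try lia; auto.
  f_equal. apply (H 1%nat); lia. apply IHl1. lia. intros i Hi. specialize (H (S i) ltac:(lia)).
  rewrite !part_cons_S in H by lia. auto.
Qed.

Lemma interl_cons x r : interl (x :: r) =
  flat_map (fun v => map (cons v) (interl r)) (seq (hd 0%nat r) (S (x - hd 0%nat r))).
Proof. reflexivity. Qed.

Lemma interl_lower l nu : In nu (interl l) ->
  length nu = length l /\ forall i, (1 <= i)%nat -> (part l (S i) <= part nu i)%nat.
Proof.
  revert nu. induction l as [|x r IH]; intros nu Hin.
  - simpl in Hin. destruct Hin as [<-|[]]. split; auto. intros. rewrite part_nil. lia.
  - rewrite interl_cons in Hin. apply in_flat_map in Hin. destruct Hin as [v [Hv Hw]].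
    apply in_map_iff in Hw. destruct Hw as [w [<- Hw]]. apply IH in Hw. destruct Hw as [Hl Hw].
    apply in_seq in Hv. split. simpl; lia.
    intros i Hi. destruct i. lia. destruct i.
    + rewrite part_cons_S, part_cons_1 by lia. unfold part. simpl. destruct r; simpl in *; lia.
    + rewrite !part_cons_S by lia. apply Hw. lia.
Qed.

Lemma interl_in l nu : dec l -> length nu = length l ->
  (forall i, (1 <= i <= length l)%nat -> (part l (S i) <= part nu i <= part l i)%nat) -> In nu (interl l).
Proof.
  revert nu. induction l as [|x r IH]; intros nu Hd Hl H.
  - destruct nu; simpl in *; try lia. auto.
  - destruct nu as [|v w]. simpl in Hl; lia. simpl in Hl.
    apply dec_cons in Hd. destruct Hd as [Hd Hx].
    rewrite interl_cons. apply in_flat_map. exists v. split.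
    + apply in_seq. specialize (H 1%nat ltac:(simpl; lia)). rewrite part_cons_S, !part_cons_1 in H by lia.
      unfold part in H. simpl in H. destruct r; simpl in *; lia.
    + apply in_map. apply IH; auto. intros i Hi. specialize (H (S i) ltac:(simpl; lia)).
      rewrite !part_cons_S in H by lia. auto.
Qed.

Lemma nodup_map_cons (v : nat) (S : list (list nat)) : NoDup S -> NoDup (map (cons v) S).
Proof.
  induction 1; simpl; constructor; auto. intros Hin. apply in_map_iff in Hin.
  destruct Hin as [w [E Hw]]. injection E; intros; subst. contradiction.
Qed.

Lemma nodup_flat_cons (vs : list nat) (S : list (list nat)) : NoDup vs -> NoDup S ->
  NoDup (flat_map (fun v => map (cons v) S) vs).
Proof.
  intros Hv HS. induction Hv; simpl. constructor.
  apply NoDup_app; auto.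
  - apply nodup_map_cons; auto.
  - intros y Hy1 Hy2. apply in_map_iff in Hy1. destruct Hy1 as [w [<- _]].
    apply in_flat_map in Hy2. destruct Hy2 as [v [Hv' Hw]]. apply in_map_iff in Hw.
    destruct Hw as [w' [E _]]. injection E; intros; subst. contradiction.
Qed.

Lemma interl_nodup l : NoDup (interl l).
Proof.
  induction l. simpl. constructor. simpl; auto. constructor.
  rewrite interl_cons. apply nodup_flat_cons; auto. apply seq_NoDup.
Qed.

Lemma spec_point_length (q t : C) l : length (spec_point q t l) = length l.
Proof. unfold spec_point. rewrite length_map, length_seq. auto. Qed.

Lemma spec_point_cons (q t : C) (x : nat) l : t <> 0 ->
  spec_point q t (x :: l) = zpow q (Z.of_nat x) * zpow t (zn (length l)) :: spec_point q t l.
Proof.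
  intros Ht. unfold spec_point. cbn [length seq map]. f_equal.
  - unfold zpart. rewrite part_cons_1. f_equal. f_equal. unfold zn. lia.
  - rewrite <- seq_shift, map_map. apply map_ext_in. intros i Hi. apply in_seq in Hi.
    unfold zpart. rewrite part_cons_S by lia. f_equal. f_equal. unfold zn. lia.
Qed.

Section VL.
Variables (p q t a b : C).
Hypotheses (Hp : (Cmod p < 1)%R) (Hq : q <> 0) (Ht : t <> 0).

Lemma esf_nonneg (c : C) (z : Z) : (0 <= z)%Z -> esf p q c z = esf_nat p q c (Z.to_nat z).
Proof. intros H. unfold esf. destruct (Z.leb_spec 0 z); auto. lia. Qed.

Lemma W1_zero a' b' (x : nat) nu ka : (part ka 1 <= x < part nu 1)%nat ->
  W1 q p t a' b' (zpow q (Z.of_nat x)) nu ka = 0.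
Proof.
  intros [H1 H2].
  assert (HR : esf_ratio q p t (/ zpow q (Z.of_nat x)) nu ka = 0).
  { unfold esf_ratio. apply (prodC_zero _ _ 1%nat).
    - apply in_seq. destruct nu. rewrite part_nil in H2. lia. simpl. lia.
    - rewrite esf_nonneg by (unfold zpart; lia). unfold esf_nat.
      apply (prodC_zero _ _ (x - part ka 1)%nat).
      + apply in_seq. unfold zpart. lia.
      + replace (/ zpow q (Z.of_nat x) * zpow t (1 - zn 1) * zpow q (zpart ka 1) * cpow q (x - part ka 1)) with (1 : C).
        apply theta_one.
        unfold zpart. simpl (1 - zn 1)%Z. rewrite zpow_0, !zpow_of_nat.
        replace x with (part ka 1 + (x - part ka 1))%nat at 1 by lia. rewrite cpow_add.
        field. split; apply cpow_nz; auto. }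
  unfold W1. destruct (interlaceb nu ka); auto. cbv zeta. rewrite HR. rewrite Cmult_0_r, !Cmult_0_l. unfold Cdiv. rewrite !Cmult_0_l. reflexivity.
Qed.

Lemma VL mu : dec mu -> forall nu r, (exists i, (1 <= i)%nat /\ (part mu i < part nu i)%nat) ->
  Wskew q p t (spec_point q t mu) a b nu (repeat 0%nat r) = 0.
Proof.
  induction mu as [|x mu' IH]; intros Hd nu r [i [Hi Hlt]].
  - change (spec_point q t []) with (@nil C). simpl. destruct (list_eq_dec Nat.eq_dec nu (repeat 0%nat r)); auto.
    subst. rewrite part_repeat0, part_nil in Hlt. lia.
  - apply dec_cons in Hd. destruct Hd as [Hd Hx].
    rewrite spec_point_cons by auto. cbn [Wskew]. rewrite spec_point_length.
    replace (zpow q (Z.of_nat x) * zpow t (zn (length mu')) * zpow t (- zn (length mu'))) with (zpow q (Z.of_nat x))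
      by (rewrite zpow_opp by auto; field; apply zpow_nz; auto).
    apply sumC_zero. intros ka Hka. apply interl_lower in Hka. destruct Hka as [_ Hka].
    destruct i. lia. destruct i.
    + rewrite part_cons_1 in Hlt. destruct (le_lt_dec (part ka 1) x).
      * rewrite W1_zero by lia. ring.
      * rewrite IH; auto. ring. exists 1%nat. lia.
    + rewrite IH; auto. ring. exists (S i). split. lia. rewrite part_cons_S in Hlt by lia.
      specialize (Hka (S i) ltac:(lia)). lia.
Qed.

End VL.

Lemma zpow_m1 (x : C) : zpow x (-1) = / x.
Proof. simpl. f_equal. ring. Qed.

Lemma zpow_m2mul (x : C) z : x <> 0 -> zpow x (-2 * z) = / (zpow x z * zpow x z).
Proof. intros Hx. replace (-2 * z)%Z with (- (z + z))%Z by lia. rewrite zpow_opp, zpow_add by auto. auto. Qed.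

Ltac zsimpl2 := repeat (first [rewrite zpow_add by assumption | rewrite zpow_sub by assumption
  | rewrite zpow_opp by assumption | rewrite zpow_2mul by assumption | rewrite zpow_m2mul by assumption
  | rewrite zpow_1 | rewrite zpow_0 | rewrite zpow_m1]).

Ltac mon_eq := unfold mon, mono; unfold zn in *; zsimpl2; field; repeat split; try (apply zpow_nz); try assumption.

Section Conv.
Variables (p q t a b : C).
Hypotheses (Hp : (Cmod p < 1)%R) (Hq : q <> 0) (Ht : t <> 0) (Ha : a <> 0) (Hb : b <> 0).
Hypothesis Hgen : forall i j k l : Z, (i, j, k, l) <> (0%Z, 0%Z, 0%Z, 0%Z) -> theta p (mon q t a b i j k l) <> 0.

Lemma esf_E (c : C) (z : Z) i j k l m : c = mon q t a b i j k l -> z = Z.of_nat m -> esf p q c z = E p q t a b i j k l m.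
Proof. intros -> ->. rewrite esf_nonneg by lia. rewrite Nat2Z.id. auto. Qed.

Lemma esf_zero (c : C) : esf p q c 0 = 1.
Proof. auto. Qed.

Variables (x : nat) (mu' : list nat) (r : nat).
Hypothesis Hd : dec (x :: mu').

Local Notation L := ((x :: mu') ++ repeat 0%nat r).
Local Notation M := (mu' ++ repeat 0%nat (S r)).
Local Notation K := (length mu').
Local Notation A := (fun i => part (x :: mu') i).
Local Notation X := (zpow q (Z.of_nat x)).
Local Notation a' := (a * zpow t (2 * zn (length mu'))).
Local Notation b' := (b * zpow t (zn (length mu'))).

Lemma lenL : length L = (S K + r)%nat.
Proof. rewrite length_app, repeat_length. auto. Qed.
Lemma lenM : length M = (S K + r)%nat.
Proof. rewrite length_app, repeat_length. simpl. lia. Qed.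
Lemma zpartL i : zpart L i = Z.of_nat (A i).
Proof. unfold zpart. rewrite part_app_repeat. auto. Qed.
Lemma zpartM i : (1 <= i)%nat -> zpart M i = Z.of_nat (A (S i)).
Proof. intros Hi. unfold zpart. rewrite part_app_repeat, part_cons_S by auto. auto. Qed.
Lemma A_over i : (S K < i)%nat -> A i = 0%nat.
Proof. intros Hi. apply part_over. simpl. lia. Qed.
Lemma A_dec i : (1 <= i)%nat -> (A (S i) <= A i)%nat.
Proof. apply Hd. Qed.

Lemma Wc : esf_ratio q p t (/ X) L M = prodC (seq 1 (S K)) (ER1 p q t a b x A).
Proof.
  unfold esf_ratio. rewrite lenL. rewrite (prodC_seq_trim 1 (S K)) by (try lia; intros i Hi;
    rewrite zpartL, zpartM, !A_over by lia; apply esf_zero).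
  apply prodC_ext. intros i Hi. apply in_seq in Hi. unfold ER1.
  rewrite zpartL, zpartM by lia. assert (HB := A_dec i ltac:(lia)). simpl in HB.
  apply esf_E; [|lia]. mon_eq.
Qed.

Lemma Wd : esf_ratio q p t (a' * X) L M = prodC (seq 1 (S K)) (ER2 p q t a b K x A).
Proof.
  unfold esf_ratio. rewrite lenL. rewrite (prodC_seq_trim 1 (S K)) by (try lia; intros i Hi;
    rewrite zpartL, zpartM, !A_over by lia; apply esf_zero).
  apply prodC_ext. intros i Hi. apply in_seq in Hi. unfold ER2.
  rewrite zpartL, zpartM by lia. assert (HB := A_dec i ltac:(lia)). simpl in HB.
  apply esf_E; [|lia]. mon_eq.
Qed.

Lemma We : esf_part q p t (q * b' * X / t) M = prodC (seq 1 K) (EP3 p q t a b K x A).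
Proof.
  unfold esf_part. rewrite lenM. rewrite (prodC_seq_trim 1 K) by (try lia; intros i Hi;
    rewrite zpartM, !A_over by lia; apply esf_zero).
  apply prodC_ext. intros i Hi. apply in_seq in Hi. unfold EP3.
  rewrite zpartM by lia. apply esf_E; [|lia]. mon_eq.
Qed.

Lemma Wf : esf_part q p t (q * b' / (a' * X * t)) M = prodC (seq 1 K) (EP4 p q t a b K x A).
Proof.
  unfold esf_part. rewrite lenM. rewrite (prodC_seq_trim 1 K) by (try lia; intros i Hi;
    rewrite zpartM, !A_over by lia; apply esf_zero).
  apply prodC_ext. intros i Hi. apply in_seq in Hi. unfold EP4.
  rewrite zpartM by lia. apply esf_E; [|lia]. mon_eq.
Qed.

Lemma Wg : esf_part q p t (q * b' * X) L = prodC (seq 1 (S K)) (EP5 p q t a b K x A).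
Proof.
  unfold esf_part. rewrite lenL. rewrite (prodC_seq_trim 1 (S K)) by (try lia; intros i Hi;
    rewrite zpartL, !A_over by lia; apply esf_zero).
  apply prodC_ext. intros i Hi. apply in_seq in Hi. unfold EP5.
  rewrite zpartL by lia. apply esf_E; [|lia]. mon_eq.
Qed.

Lemma Wh : esf_part q p t (q * b' / (a' * X)) L = prodC (seq 1 (S K)) (EP6 p q t a b K x A).
Proof.
  unfold esf_part. rewrite lenL. rewrite (prodC_seq_trim 1 (S K)) by (try lia; intros i Hi;
    rewrite zpartL, !A_over by lia; apply esf_zero).
  apply prodC_ext. intros i Hi. apply in_seq in Hi. unfold EP6.
  rewrite zpartL by lia. apply esf_E; [|lia]. mon_eq.
Qed.

Definition THf (i : nat) : C := E p q t a b 1 (Z.of_nat K + 1 - 2 * Z.of_nat i) 0 1 (2 * A (S i))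
  / E p q t a b 1 (Z.of_nat K - 2 * Z.of_nat i) 0 1 (2 * A (S i)).

Lemma Wi : prodC (seq 1 (length L)) (fun i =>
     theta p (mono q t b' (2 * zpart M i) (1 - 2 * zn i)) / theta p (mono q t b' 0 (1 - 2 * zn i))
     * esf p q (mono q t b' 0 (1 - 2 * zn i)) (zpart M i + zpart L (S i))
     / esf p q (mono q t b' 1 (- 2 * zn i)) (zpart M i + zpart L (S i))
     * zpow t (zn i * (zpart M i - zpart L (S i))))
  = prodC (seq 1 K) THf.
Proof.
  rewrite lenL.
  rewrite (prodC_ext _ _ THf).
  2:{ intros i Hi. apply in_seq in Hi. rewrite zpartM, zpartL by lia.
      rewrite Z.sub_diag, Z.mul_0_r, zpow_0. unfold THf.
      cbv beta. generalize (part (x :: mu') (S i)). intros B.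
      rewrite (esf_E _ _ 0 (Z.of_nat K + 1 - 2 * Z.of_nat i) 0 1 (2 * B)) by (try mon_eq; lia).
      rewrite (esf_E _ _ 1 (Z.of_nat K - 2 * Z.of_nat i) 0 1 (2 * B)) by (try mon_eq; lia).
      replace (mono q t b' (2 * Z.of_nat B) (1 - 2 * zn i)) with (mon q t a b (0 + Z.of_nat (2 * B)) (Z.of_nat K + 1 - 2 * Z.of_nat i) 0 1)
        by (rewrite Nat2Z.inj_mul; mon_eq).
      replace (mono q t b' 0 (1 - 2 * zn i)) with (mon q t a b 0 (Z.of_nat K + 1 - 2 * Z.of_nat i) 0 1) by mon_eq.
      assert (Hs := E_Sr p q t a b Hq 0 (Z.of_nat K + 1 - 2 * Z.of_nat i) 0 1 (2 * B)).
      rewrite E_Sl in Hs by assumption. replace (0 + 1)%Z with 1%Z in Hs by lia.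
      assert (theta p (mon q t a b 0 (Z.of_nat K + 1 - 2 * Z.of_nat i) 0 1) <> 0) by (apply th_nz; auto; lia).
      assert (E p q t a b 1 (Z.of_nat K - 2 * Z.of_nat i) 0 1 (2 * B) <> 0) by (apply E_nz; auto; lia).
      transitivity (theta p (mon q t a b 0 (Z.of_nat K + 1 - 2 * Z.of_nat i) 0 1) * E p q t a b 1 (Z.of_nat K + 1 - 2 * Z.of_nat i) 0 1 (2 * B)
        / (theta p (mon q t a b 0 (Z.of_nat K + 1 - 2 * Z.of_nat i) 0 1) * E p q t a b 1 (Z.of_nat K - 2 * Z.of_nat i) 0 1 (2 * B))).
      - rewrite Hs. field. auto.
      - field. auto. }
  apply prodC_seq_trim. lia. intros i Hi. unfold THf. rewrite A_over by lia. simpl (2 * 0)%nat.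
  unfold E, esf_nat. simpl. field.
Qed.

Lemma Wb (bb : C) : Hfac q p t bb L M = 1.
Proof.
  unfold Hfac. cbv beta zeta. rewrite !prodC_one. ring.
  - intros i Hi. apply in_seq in Hi. apply prodC_one. intros j Hj. apply in_seq in Hj.
    rewrite (zpartM (j - 1)) by lia. replace (S (j - 1)) with j by lia. rewrite (zpartL j). rewrite Z.sub_diag. rewrite !esf_zero. field.
  - intros i Hi. apply in_seq in Hi. apply prodC_one. intros j Hj. apply in_seq in Hj.
    rewrite (zpartM (j - 1)) by lia. replace (S (j - 1)) with j by lia. rewrite (zpartL j). rewrite Z.sub_diag. rewrite !esf_zero. field.
Qed.

Lemma Wa : interlaceb L M = true.
Proof.
  unfold interlaceb. apply andb_true_iff. split. apply Nat.eqb_eq. rewrite lenL, lenM. auto.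
  apply forallb_forall. intros i Hi. apply in_seq in Hi. apply andb_true_iff.
  rewrite !part_app_repeat, !part_cons_S by lia. split; apply Nat.leb_le.
  - assert (H := A_dec i ltac:(lia)). simpl in H. rewrite part_cons_S in H by lia. auto.
  - lia.
Qed.

Lemma W1val : W1 q p t a' b' X L M =
  prodC (seq 1 (S K)) (ER1 p q t a b x A) * prodC (seq 1 (S K)) (ER2 p q t a b K x A)
  * prodC (seq 1 K) (EP3 p q t a b K x A) * prodC (seq 1 K) (EP4 p q t a b K x A)
  / (prodC (seq 1 (S K)) (EP5 p q t a b K x A) * prodC (seq 1 (S K)) (EP6 p q t a b K x A))
  * prodC (seq 1 K) THf.
Proof.
  unfold W1. rewrite Wa. cbv zeta. rewrite Wb, Wc, Wd, We, Wf, Wg, Wh, Wi. unfold Cdiv. ring.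
Qed.

End Conv.

Section RHSsec.
Variables (p q t a b : C).
Hypotheses (Hp : (Cmod p < 1)%R) (Hq : q <> 0) (Ht : t <> 0) (Ha : a <> 0) (Hb : b <> 0).
Hypothesis Hgen : forall i j k l : Z, (i, j, k, l) <> (0%Z, 0%Z, 0%Z, 0%Z) -> theta p (mon q t a b i j k l) <> 0.

Definition fSP (n k : nat) (Az : Z) : C :=
  esf p q (q * b * zpow t (zn n - zn k)) Az
  * esf p q (q * zpow t (zn n - zn k)) Az
  * esf p q (a * zpow t (2 * zn n - 2 * zn k)) (2 * Az)
  / (esf p q (a / b * zpow t (zn n - zn k)) Az
     * esf p q (a * zpow t (zn n - zn k)) Az
     * esf p q (q * b * zpow t (zn n + 1 - 2 * zn k)) (2 * Az))
  * zpow t ((zn n + 1 - 2 * zn k) * Az).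

Definition fPP (n i j : nat) (Ai Aj : Z) : C :=
  esf p q (q * zpow t (zn j - zn i - 1)) (Ai - Aj)
  * esf p q (a * zpow t (2 * zn n - zn i - zn j)) (Ai + Aj)
  / (esf p q (q * zpow t (zn j - zn i)) (Ai - Aj)
     * esf p q (a * zpow t (1 + 2 * zn n - zn i - zn j)) (Ai + Aj)).

Definition SPr (l : list nat) := prodC (seq 1 (length l)) (fun k => fSP (length l) k (zpart l k)).
Definition PPr (l : list nat) := prodC (seq 1 (length l)) (fun i => prodC (seq (S i) (length l - i))
   (fun j => fPP (length l) i j (zpart l i) (zpart l j))).
Definition RHSr (l : list nat) : C := SPr l * cpow (a / (q * b)) (psize l) * PPr l.

Local Notation E := (E p q t a b).

Lemma fSP_E n k (A : nat) : fSP n k (Z.of_nat A) =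
  E 1 (zn n - zn k) 0 1 A * E 1 (zn n - zn k) 0 0 A * E 0 (2 * zn n - 2 * zn k) 1 0 (2 * A)
  / (E 0 (zn n - zn k) 1 (-1) A * E 0 (zn n - zn k) 1 0 A * E 1 (zn n + 1 - 2 * zn k) 0 1 (2 * A))
  * zpow t ((zn n + 1 - 2 * zn k) * Z.of_nat A).
Proof.
  unfold fSP.
  rewrite (esf_E p q t a b _ _ 1 (zn n - zn k) 0 1 A) by (try mon_eq; lia).
  rewrite (esf_E p q t a b _ _ 1 (zn n - zn k) 0 0 A) by (try mon_eq; lia).
  rewrite (esf_E p q t a b _ _ 0 (2 * zn n - 2 * zn k) 1 0 (2 * A)) by (try mon_eq; lia).
  rewrite (esf_E p q t a b _ _ 0 (zn n - zn k) 1 (-1) A) by (try mon_eq; lia).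
  rewrite (esf_E p q t a b _ _ 0 (zn n - zn k) 1 0 A) by (try mon_eq; lia).
  rewrite (esf_E p q t a b _ _ 1 (zn n + 1 - 2 * zn k) 0 1 (2 * A)) by (try mon_eq; lia).
  auto.
Qed.

Lemma fSP_E' n k (A : nat) u w v : u = (zn n - zn k)%Z -> w = (2 * zn n - 2 * zn k)%Z -> v = (zn n + 1 - 2 * zn k)%Z ->
  fSP n k (Z.of_nat A) =
  E 1 u 0 1 A * E 1 u 0 0 A * E 0 w 1 0 (2 * A)
  / (E 0 u 1 (-1) A * E 0 u 1 0 A * E 1 v 0 1 (2 * A)) * zpow t (v * Z.of_nat A).
Proof. intros -> -> ->. apply fSP_E. Qed.

Lemma fSP_shift k' m (A : nat) : fSP (S k') (S m) (Z.of_nat A) =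
  fSP k' m (Z.of_nat A) * (E 1 (Z.of_nat k' + 1 - 2 * Z.of_nat m) 0 1 (2 * A) / E 1 (Z.of_nat k' - 2 * Z.of_nat m) 0 1 (2 * A))
  * zpow t (- Z.of_nat A).
Proof.
  rewrite (fSP_E' (S k') (S m) A (Z.of_nat k' - Z.of_nat m) (2 * Z.of_nat k' - 2 * Z.of_nat m) (Z.of_nat k' - 2 * Z.of_nat m)) by (unfold zn; lia).
  rewrite (fSP_E' k' m A (Z.of_nat k' - Z.of_nat m) (2 * Z.of_nat k' - 2 * Z.of_nat m) (Z.of_nat k' + 1 - 2 * Z.of_nat m)) by (unfold zn; lia).
  replace ((Z.of_nat k' - 2 * Z.of_nat m) * Z.of_nat A)%Z with ((Z.of_nat k' + 1 - 2 * Z.of_nat m) * Z.of_nat A + - Z.of_nat A)%Z by ring.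
  rewrite zpow_add by auto.
  assert (E 0 (Z.of_nat k' - Z.of_nat m) 1 (-1) A <> 0) by (apply E_nz; auto; lia).
  assert (E 0 (Z.of_nat k' - Z.of_nat m) 1 0 A <> 0) by (apply E_nz; auto; lia).
  assert (E 1 (Z.of_nat k' + 1 - 2 * Z.of_nat m) 0 1 (2 * A) <> 0) by (apply E_nz; auto; lia).
  assert (E 1 (Z.of_nat k' - 2 * Z.of_nat m) 0 1 (2 * A) <> 0) by (apply E_nz; auto; lia).
  field. repeat split; auto.
Qed.

Lemma fSP_first k' (x : nat) : fSP (S k') 1 (Z.of_nat x) = S1 p q t a b k' x.
Proof.
  rewrite (fSP_E' (S k') 1 x (Z.of_nat k') (2 * Z.of_nat k') (Z.of_nat k')) by (unfold zn; lia).
  unfold S1. auto.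
Qed.

Lemma fPP_shift n i j (Ai Aj : Z) : fPP (S n) (S i) (S j) Ai Aj = fPP n i j Ai Aj.
Proof.
  unfold fPP. replace (zn (S j) - zn (S i) - 1)%Z with (zn j - zn i - 1)%Z by (unfold zn; lia).
  replace (2 * zn (S n) - zn (S i) - zn (S j))%Z with (2 * zn n - zn i - zn j)%Z by (unfold zn; lia).
  replace (zn (S j) - zn (S i))%Z with (zn j - zn i)%Z by (unfold zn; lia).
  replace (1 + 2 * zn (S n) - zn (S i) - zn (S j))%Z with (1 + 2 * zn n - zn i - zn j)%Z by (unfold zn; lia).
  auto.
Qed.

Lemma fPP_row k' (x B : nat) j : (B <= x)%nat -> fPP (S k') 1 (S j) (Z.of_nat x) (Z.of_nat B) =
  E 1 (Z.of_nat j - 1) 0 0 (x - B) * E 0 (2 * Z.of_nat k' - Z.of_nat j) 1 0 (x + B)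
   / (E 1 (Z.of_nat j) 0 0 (x - B) * E 0 (2 * Z.of_nat k' + 1 - Z.of_nat j) 1 0 (x + B)).
Proof.
  intros HB. unfold fPP.
  replace (zn (S j) - zn 1 - 1)%Z with (Z.of_nat j - 1)%Z by (unfold zn; lia).
  replace (2 * zn (S k') - zn 1 - zn (S j))%Z with (2 * Z.of_nat k' - Z.of_nat j)%Z by (unfold zn; lia).
  replace (zn (S j) - zn 1)%Z with (Z.of_nat j)%Z by (unfold zn; lia).
  replace (1 + 2 * zn (S k') - zn 1 - zn (S j))%Z with (2 * Z.of_nat k' + 1 - Z.of_nat j)%Z by (unfold zn; lia).
  rewrite (esf_E p q t a b _ _ 1 (Z.of_nat j - 1) 0 0 (x - B)) by (try mon_eq; lia).
  rewrite (esf_E p q t a b _ _ 0 (2 * Z.of_nat k' - Z.of_nat j) 1 0 (x + B)) by (try mon_eq; lia).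
  rewrite (esf_E p q t a b _ _ 1 (Z.of_nat j) 0 0 (x - B)) by (try mon_eq; lia).
  rewrite (esf_E p q t a b _ _ 0 (2 * Z.of_nat k' + 1 - Z.of_nat j) 1 0 (x + B)) by (try mon_eq; lia).
  auto.
Qed.

End RHSsec.

Section MainSec.
Variables (p q t a b : C).
Hypotheses (Hp : (Cmod p < 1)%R) (Hq : q <> 0) (Ht : t <> 0) (Ha : a <> 0) (Hb : b <> 0).
Hypothesis Hgen : forall i j k l : Z, (i, j, k, l) <> (0%Z, 0%Z, 0%Z, 0%Z) -> theta p (mon q t a b i j k l) <> 0.

Lemma zpart_cons_S (x : nat) l i : (1 <= i)%nat -> zpart (x :: l) (S i) = zpart l i.
Proof. intros. unfold zpart. rewrite part_cons_S; auto. Qed.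

Lemma SP_cons x mu' : SPr p q t a b (x :: mu') =
  fSP p q t a b (S (length mu')) 1 (Z.of_nat x) * prodC (seq 1 (length mu')) (fun m => fSP p q t a b (S (length mu')) (S m) (zpart mu' m)).
Proof.
  unfold SPr. cbn [length]. rewrite prod_first. f_equal. apply prodC_ext. intros m Hm. apply in_seq in Hm.
  rewrite zpart_cons_S by lia. auto.
Qed.

Lemma PP_cons x mu' : PPr p q t a (x :: mu') =
  prodC (seq 1 (length mu')) (fun j => fPP p q t a (S (length mu')) 1 (S j) (Z.of_nat x) (zpart mu' j)) * PPr p q t a mu'.
Proof.
  unfold PPr. cbn [length]. rewrite prod_first. f_equal.
  - replace (S (length mu') - 1)%nat with (length mu') by lia. rewrite prodC_seq_shift.
    apply prodC_ext. intros j Hj. apply in_seq in Hj. rewrite (zpart_cons_S x mu' j) by lia. auto.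
  - apply prodC_ext. intros i Hi. apply in_seq in Hi.
    replace (S (length mu') - S i)%nat with (length mu' - i)%nat by lia. rewrite prodC_seq_shift.
    apply prodC_ext. intros j Hj. apply in_seq in Hj. rewrite !zpart_cons_S by lia. apply fPP_shift.
Qed.

Lemma dec_le_head x l : dec (x :: l) -> forall j, (1 <= j)%nat -> (part l j <= x)%nat.
Proof.
  intros Hd. apply dec_cons in Hd. destruct Hd as [Hd Hx]. intros j Hj. induction j. lia.
  destruct j. auto. specialize (Hd (S j) ltac:(lia)). specialize (IHj ltac:(lia)). lia.
Qed.

Lemma CL x mu' r : dec (x :: mu') ->
  W1 q p t (a * zpow t (2 * zn (length mu'))) (b * zpow t (zn (length mu'))) (zpow q (Z.of_nat x))
    ((x :: mu') ++ repeat 0%nat r) (mu' ++ repeat 0%nat (S r)) * RHSr p q t a b mu' = RHSr p q t a b (x :: mu').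
Proof.
  intros Hd. rewrite W1val by assumption.
  assert (HA1 : (fun i => part (x :: mu') i) 1%nat = x) by reflexivity.
  assert (Hdec : forall i, (1 <= i)%nat -> ((fun i => part (x :: mu') i) (S i) <= (fun i => part (x :: mu') i) i)%nat).
  { intros i Hi. apply Hd. auto. }
  assert (Hz : forall i, (length mu' + 2 <= i)%nat -> (fun i => part (x :: mu') i) i = 0%nat).
  { intros i Hi. apply part_over. simpl. lia. }
  rewrite (EC p q t a b Hp Hq Ht Ha Hb Hgen (length mu') x _ HA1 Hdec Hz).
  unfold RHSr. rewrite SP_cons, PP_cons. simpl psize. rewrite cpow_add. rewrite fSP_first.
  rewrite (prodC_ext _ (fun m => fSP p q t a b (S (length mu')) (S m) (zpart mu' m))
     (fun m => fSP p q t a b (length mu') m (zpart mu' m) * THf p q t a b x mu' m * zpow t (- Z.of_nat (part mu' m)))).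
  2:{ intros m Hm. apply in_seq in Hm. unfold zpart. rewrite fSP_shift by assumption. unfold THf.
      rewrite (part_cons_S x mu' m) by lia. auto. }
  rewrite !prodC_mult.
  rewrite (prodC_ext _ (fun j => fPP p q t a (S (length mu')) 1 (S j) (Z.of_nat x) (zpart mu' j)) (Rw p q t a b (length mu') x (fun i => part (x :: mu') i))).
  2:{ intros j Hj. apply in_seq in Hj. unfold zpart. rewrite (fPP_row p q t a b Ht) by (apply dec_le_head; auto; lia).
      unfold Rw. rewrite (part_cons_S x mu' j) by lia. auto. }
  rewrite (prodC_ext _ (fun m => zpow t (- Z.of_nat ((fun i => part (x :: mu') i) (S m)))) (fun m => zpow t (- Z.of_nat (part mu' m)))).
  2:{ intros m Hm. apply in_seq in Hm. rewrite (part_cons_S x mu' m) by lia. auto. }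
  fold (SPr p q t a b mu'). unfold Cdiv. ring. all: assumption.
Qed.

Lemma ML mu : dec mu -> forall r,
  Wskew q p t (spec_point q t mu) a b (mu ++ repeat 0%nat r) (repeat 0%nat (length mu + r)) = RHSr p q t a b mu.
Proof.
  induction mu as [|x mu' IH]; intros Hd r.
  - change (spec_point q t []) with (@nil C). cbn [Wskew]. simpl app. simpl length. simpl (0 + r)%nat.
    destruct (list_eq_dec Nat.eq_dec (repeat 0%nat r) (repeat 0%nat r)); [|contradiction].
    unfold RHSr, SPr, PPr. simpl. ring.
  - assert (Hd' := dec_cons x mu' Hd). destruct Hd' as [Hdm Hx].
    rewrite spec_point_cons by auto. cbn [Wskew]. rewrite spec_point_length.
    replace (zpow q (Z.of_nat x) * zpow t (zn (length mu')) * zpow t (- zn (length mu'))) with (zpow q (Z.of_nat x))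
      by (rewrite zpow_opp by auto; field; apply zpow_nz; auto).
    rewrite (sumC_single _ _ (mu' ++ repeat 0%nat (S r))).
    + replace (length (x :: mu') + r)%nat with (length mu' + S r)%nat by (simpl; lia).
      rewrite IH by auto. apply CL. auto.
    + apply interl_nodup.
    + apply interl_in. apply dec_app_repeat. auto.
      rewrite !length_app, !repeat_length. simpl. lia.
      intros i Hi. rewrite !part_app_repeat. rewrite part_cons_S by lia. split. lia. assert (HH := Hd i ltac:(lia)). rewrite part_cons_S in HH by lia. exact HH.
    + intros ka Hka Hne. apply interl_lower in Hka. destruct Hka as [Hlen Hlow].
      destruct (classic (exists i, (1 <= i)%nat /\ (part mu' i < part ka i)%nat)) as [Hex|Hnex].
      * replace (length (x :: mu') + r)%nat with (S (length mu') + r)%nat by auto.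
        rewrite (VL p q t a b Hq Ht mu' Hdm ka _ Hex). ring.
      * exfalso. apply Hne. apply part_eq_list.
        rewrite Hlen, !length_app, !repeat_length. simpl. lia.
        intros i Hi. rewrite part_app_repeat. specialize (Hlow i Hi). rewrite part_app_repeat, part_cons_S in Hlow by lia.
        assert (~ (part mu' i < part ka i)%nat) by (intros HH; apply Hnex; exists i; auto). lia.
Qed.

End MainSec.

Theorem mainTheorem12 (p q t a b : C) (l : list nat) :
  generic p q t a b -> is_partition l ->
  let n := length l in
  W q p t (spec_point q t l) a b l =
    prodC (seq 1 n) (fun k =>
      esf p q (q * b * zpow t (zn n - zn k)) (zpart l k)
      * esf p q (q * zpow t (zn n - zn k)) (zpart l k)
      * esf p q (a * zpow t (2 * zn n - 2 * zn k)) (2 * zpart l k)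
      / (esf p q (a / b * zpow t (zn n - zn k)) (zpart l k)
         * esf p q (a * zpow t (zn n - zn k)) (zpart l k)
         * esf p q (q * b * zpow t (zn n + 1 - 2 * zn k)) (2 * zpart l k))
      * zpow t ((zn n + 1 - 2 * zn k) * zpart l k))
    * cpow (a / (q * b)) (psize l)
    * prodC (seq 1 n) (fun i => prodC (seq (S i) (n - i)) (fun j =>
        esf p q (q * zpow t (zn j - zn i - 1)) (zpart l i - zpart l j)
        * esf p q (a * zpow t (2 * zn n - zn i - zn j)) (zpart l i + zpart l j)
        / (esf p q (q * zpow t (zn j - zn i)) (zpart l i - zpart l j)
           * esf p q (a * zpow t (1 + 2 * zn n - zn i - zn j)) (zpart l i + zpart l j)))).
Proof.
  intros [Hp [Hq [Ht [Ha [Hb Hg]]]]] Hpart n.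
  assert (H := ML p q t a b Hp Hq Ht Ha Hb Hg l (is_partition_dec l Hpart) 0).
  rewrite app_nil_r, Nat.add_0_r in H. unfold W. rewrite H.
  unfold RHSr, SPr, PPr, fSP, fPP. subst n. reflexivity.
Qed.
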